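(* For $i=1,\dots,d$ let $\omega_i\subseteq\mathbb{R}$ be a nonempty open interval and $f_i:\omega_i\to\mathbb{R}$ a univariate function of Legendre type; let $\Omega=\prod_{i=1}^d\omega_i$ and $F(x)=\sum_{i=1}^d f_i(x_i)$, with Bregman divergence $D_F$. Let $A=\prod_{i=1}^d[a_i,b_i]$ be an axis-aligned box with $A\cap\Omega\neq\emptyset$, let $q\in\Omega$, and let $p$ be the Euclidean projection of $q$ onto $A$, i.e. $p_i=\min(\max(q_i,a_i),b_i)$. Then the Bregman projection divergence of $q$ onto $A$ satisfies $$\inf_{x\in A\cap\Omega} D_F(q\|x)=\sum_{i=1}^d D_{f_i}(q_i\|p_i)=D_F(q\|p).$$
   Context: A function $G:U\to\mathbb{R}$ on a nonempty open convex set $U$ is of Legendre type if it is differentiable, strictly convex, and, if $\partial U\neq\emptyset$, $\|\nabla G(x)\|\to\infty$ as $x\to\partial U$. The Bregman divergence generated by $G$ is $D_G(x\|y)=G(x)-G(y)-\langle\nabla G(y),x-y\rangle$; for univariate $f_i$ this is $D_{f_i}(s\|t)=f_i(s)-f_i(t)-f_i'(t)(s-t)$. *)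

(* Defs.v *)
From HB Require Import structures.
From mathcomp Require Import all_boot all_order all_algebra.
From mathcomp Require Import all_classical all_reals all_analysis.
Set Implicit Arguments. Unset Strict Implicit. Unset Printing Implicit Defensive.
Import Order.TTheory GRing.Theory Num.Theory.
Import numFieldNormedType.Exports.
Local Open Scope classical_set_scope.
Local Open Scope ring_scope.

Definition open_itv (R : realType) (lo hi : \bar R) : set R :=
  [set x | (lo < x%:E)%E /\ (x%:E < hi)%E].

Definition strictly_convex_on (R : realType) (U : set R) (f : R -> R) : Prop :=
  forall x y t, U x -> U y -> x != y -> 0 < t < 1 ->
    f (t * x + (1 - t) * y) < t * f x + (1 - t) * f y.

Definition legendre_univ (R : realType) (lo hi : \bar R) (f : R -> R) : Prop :=
  [/\ forall x, open_itv lo hi x -> derivable f x 1,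
      strictly_convex_on (open_itv lo hi) f,
      (forall r : R, lo = r%:E ->
         `|derive1 f x| @[x --> r^'+] --> +oo) &
      (forall r : R, hi = r%:E ->
         `|derive1 f x| @[x --> r^'-] --> +oo)].

Definition bregman1 (R : realType) (f : R -> R) (s t : R) : R :=
  f s - f t - derive1 f t * (s - t).

Definition sepF (R : realType) (d : nat) (f : 'I_d -> R -> R) (x : 'I_d -> R) : R :=
  \sum_(i < d) f i (x i).

Definition gradF (R : realType) (d : nat) (f : 'I_d -> R -> R) (x : 'I_d -> R)
  : 'I_d -> R := fun i => derive1 (f i) (x i).

Definition bregmanF (R : realType) (d : nat) (f : 'I_d -> R -> R)
  (q x : 'I_d -> R) : R :=
  sepF f q - sepF f x - \sum_(i < d) gradF f x i * (q i - x i).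

Definition Omega (R : realType) (d : nat) (lo hi : 'I_d -> \bar R) : set ('I_d -> R) :=
  [set x | forall i, open_itv (lo i) (hi i) (x i)].

Definition box (R : realType) (d : nat) (a b : 'I_d -> R) : set ('I_d -> R) :=
  [set x | forall i, a i <= x i <= b i].

Definition proj_box (R : realType) (d : nat) (a b q : 'I_d -> R) : 'I_d -> R :=
  fun i => Num.min (Num.max (q i) (a i)) (b i).

(* Main.v *)
Require Import Defs.
From HB Require Import structures.
From mathcomp Require Import all_boot all_order all_algebra.
From mathcomp Require Import all_classical all_reals all_analysis.
From mathcomp Require Import lra ring.
Import Order.TTheory GRing.Theory Num.Theory.
Import numFieldNormedType.Exports.
Local Open Scope classical_set_scope.
Local Open Scope ring_scope.

Set Implicit Arguments. Unset Strict Implicit.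
Section S.
Variable R : realType.

Lemma dq_cvg (f : R -> R) x : derivable f x 1 ->
  (fun h => h^-1 * (f (h + x) - f x)) @ 0^' --> derive1 f x.
Proof.
move=> df.
have E : (fun h : R => h^-1 *: ((f \o shift x) (h *: 1) - f x)) =
  (fun h => h^-1 * (f (h + x) - f x)).
  by apply/funext => h /=; rewrite /GRing.scale /= mulr1.
move: df; rewrite /derivable E => df.
rewrite /derive1; exact: df.
Qed.

Lemma rfiner (p : R) : (p^'+ : set_system R) `=>` p^'.
Proof.
move=> A; rewrite /dnbhs /at_right /within /=; apply: filterS => y H1 H2.
by apply: H1; rewrite gt_eqF.
Qed.
Lemma lfiner (p : R) : (p^'- : set_system R) `=>` p^'.
Proof.
move=> A; rewrite /dnbhs /at_left /within /=; apply: filterS => y H1 H2.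
by apply: H1; rewrite lt_eqF.
Qed.
Lemma right_of (p : R) (F : R -> R) (l : R) :
  F x @[x --> p^'] --> l -> F x @[x --> p^'+] --> l.
Proof. by move=> H; apply: cvg_trans H; apply: cvg_fmap2; apply: rfiner. Qed.
Lemma left_of (p : R) (F : R -> R) (l : R) :
  F x @[x --> p^'] --> l -> F x @[x --> p^'-] --> l.
Proof. by move=> H; apply: cvg_trans H; apply: cvg_fmap2; apply: lfiner. Qed.
Lemma tangent (U : set R) (f : R -> R) x y : strictly_convex_on U f ->
  U x -> U y -> derivable f x 1 -> f x + derive1 f x * (y - x) <= f y.
Proof.
move=> cv Ux Uy df; have C := dq_cvg df.
case: (ltgtP x y) => [xy|yx|<-]; last by rewrite subrr mulr0 addr0.
- have yx0 : 0 < y - x by rewrite subr_gt0.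
  set s := (f y - f x) / (y - x).
  have : derive1 f x <= s.
    have Cr := right_of C.
    rewrite -(cvg_lim _ Cr) //; apply: limr_le; first exact: cvgP Cr.
    near=> h.
    have h0 : 0 < h by near: h; exact: nbhs_right_gt.
    have hyx : h < y - x by near: h; exact: nbhs_right_lt.
    set t := h / (y - x).
    have t0 : 0 < t by rewrite divr_gt0.
    have t1 : t < 1 by rewrite ltr_pdivrMr // mul1r.
    have := cv y x t Uy Ux (negbT (gt_eqF xy)) (introT andP (conj t0 t1)).
    have -> : t * y + (1 - t) * x = h + x by rewrite /t; field; rewrite gt_eqF.
    move=> H.
    rewrite ler_pdivrMl // /s.
    have -> : h * ((f y - f x) / (y - x)) = t * (f y - f x) by rewrite /t; field; rewrite gt_eqF.
    lra.
  move=> ds.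
  have -> : f y = f x + s * (y - x) by rewrite /s divfK ?gt_eqF //; ring.
  by rewrite lerD2l ler_pM2r.
- have yx0 : y - x < 0 by rewrite subr_lt0.
  set s := (f y - f x) / (y - x).
  have : s <= derive1 f x.
    have Cr := left_of C.
    rewrite -(cvg_lim _ Cr) //; apply: limr_ge; first exact: cvgP Cr.
    near=> h.
    have h0 : h < 0 by near: h; exact: nbhs_left_lt.
    have hyx : y - x < h by near: h; exact: nbhs_left_gt.
    set t := h / (y - x).
    have t0 : 0 < t by rewrite /t -[h]opprK -[y - x]opprK invrN mulrNN divr_gt0 // oppr_gt0.
    have t1 : t < 1 by rewrite /t ltr_ndivrMr // mul1r.
    have := cv y x t Uy Ux (negbT (lt_eqF yx)) (introT andP (conj t0 t1)).
    have -> : t * y + (1 - t) * x = h + x by rewrite /t; field; rewrite lt_eqF.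
    move=> H.
    rewrite ler_ndivlMl // /s.
    have -> : h * ((f y - f x) / (y - x)) = t * (f y - f x) by rewrite /t; field; rewrite lt_eqF.
    nra.
  move=> ds.
  have -> : f y = f x + s * (y - x) by rewrite /s divfK ?lt_eqF //; ring.
  by rewrite lerD2l ler_nM2r.
Unshelve. all: by end_near.
Qed.
Lemma mono (U : set R) (f : R -> R) q y x : strictly_convex_on U f ->
  U x -> U y -> derivable f x 1 -> derivable f y 1 ->
  (q <= y <= x) || (x <= y <= q) -> bregman1 f q y <= bregman1 f q x.
Proof.
move=> cv Ux Uy dfx dfy H.
have T1 := tangent cv Ux Uy dfx.
have T2 := tangent cv Uy Ux dfy.
case: (eqVneq x y) => [->|xy]; first by [].
rewrite /bregman1.
move: T1 T2; set dx := derive1 f x; set dy := derive1 f y => T1 T2.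
case/orP: H => /andP[a1 a2].
- have yx : y < x by rewrite lt_neqAle eq_sym xy a2.
  have d0 : 0 <= dx - dy by nra.
  have := mulr_ge0 d0 (ltac:(by rewrite subr_ge0) : 0 <= y - q).
  nra.
- have yx : x < y by rewrite lt_neqAle xy a1.
  have d0 : 0 <= dy - dx by nra.
  have := mulr_ge0 d0 (ltac:(by rewrite subr_ge0) : 0 <= q - y).
  nra.
Qed.

Lemma sepE d (f : 'I_d -> R -> R) q x :
  bregmanF f q x = \sum_(i < d) bregman1 (f i) (q i) (x i).
Proof. by rewrite /bregmanF /sepF /gradF /bregman1 -!sumrB. Qed.

Lemma itv_between (lo hi : \bar R) u v w : open_itv lo hi u -> open_itv lo hi v ->
  u <= w <= v -> open_itv lo hi w.
Proof.
move=> [h1 h2] [h3 h4] /andP[uw wv]; split.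
  by apply: (lt_le_trans h1); rewrite lee_fin.
by apply: (le_lt_trans _ h4); rewrite lee_fin.
Qed.
End S.

Theorem corollary1 (R : realType) (d : nat) (lo hi : 'I_d -> \bar R)
  (f : 'I_d -> R -> R) (a b q : 'I_d -> R) :
  (forall i, (lo i < hi i)%E) ->
  (forall i, legendre_univ (lo i) (hi i) (f i)) ->
  box a b `&` Omega lo hi !=set0 ->
  Omega lo hi q ->
  inf [set bregmanF f q x | x in box a b `&` Omega lo hi]
    = \sum_(i < d) bregman1 (f i) (q i) (proj_box a b q i)
  /\ \sum_(i < d) bregman1 (f i) (q i) (proj_box a b q i)
    = bregmanF f q (proj_box a b q).
Proof.
move=> _ leg [z [zA zO]] qO.
set p := proj_box a b q.
have ab i : a i <= b i by case/andP: (zA i) => h1 h2; exact: le_trans h2.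
have pc i : [\/ p i = a i /\ q i < a i, p i = b i /\ b i <= q i |
                 p i = q i /\ a i <= q i <= b i].
  rewrite /p /proj_box /Order.max /Order.min.
  case: (ltP (q i) (a i)) => h1.
    apply: Or31; split => //; case: ltP => h2 //.
    by apply/eqP; rewrite eq_le h2 ab.
  case: (ltP (q i) (b i)) => h2.
    by apply: Or33; split => //; rewrite ltW.
  by apply: Or32.
have pO : Omega lo hi p.
  move=> i; have [zi1 zi2] := andP (zA i).
  case: (pc i) => [[-> h]|[-> h]|[-> h]] //.
  - by apply: (itv_between (qO i) (zO i)); rewrite zi1 ltW.
  - by apply: (itv_between (zO i) (qO i)); rewrite zi2.
have pA : box a b p.
  move=> i; case: (pc i) => [[-> h]|[-> h]|[-> h]] //.
  - by apply/andP; split; [exact: le_refl | exact: ab].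
  - by apply/andP; split; [exact: ab | exact: le_refl].
set v := \sum_(i < d) bregman1 (f i) (q i) (p i).
have Sv : [set bregmanF f q x | x in box a b `&` Omega lo hi] v.
  by exists p => //; rewrite sepE.
have lb : lbound [set bregmanF f q x | x in box a b `&` Omega lo hi] v.
  move=> _ [x [xA xO] <-]; rewrite sepE; apply: ler_sum => i _.
  have [der cv _ _] := leg i.
  apply: (mono cv (xO i) (pO i) (der _ (xO i)) (der _ (pO i))).
  have [xi1 xi2] := andP (xA i).
  case: (pc i) => [[-> h]|[-> h]|[-> h]].
  - by apply/orP; left; apply/andP; split; [exact: ltW h | exact: xi1].
  - by apply/orP; right; apply/andP; split; [exact: xi2 | exact: h].
  - case/orP: (le_total (q i) (x i)) => h'.
      by apply/orP; left; apply/andP; split; [exact: le_refl | exact: h'].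
    by apply/orP; right; apply/andP; split; [exact: h' | exact: le_refl].
split; last by rewrite sepE.
apply/eqP; rewrite eq_le; apply/andP; split.
  by apply: ge_inf => //; exists v.
by apply: lb_le_inf => //; exists v.
Qed.
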